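(* Min-Sum CMP can be solved in $\mathcal{O}(1)$ time for two robots.
   Context: Robots are axis-parallel unit squares in $\mathbb{R}^2$: a robot at position $p$ occupies $p+\boxdot$, $\boxdot=\{q:\|q\|_\infty\le 1/2\}$. Distances are measured in the $L_1$ norm $\|p\|=|x(p)|+|y(p)|$. A configuration of $k$ robots is a tuple $(p_1,\dots,p_k)$ with $\|p_i-p_j\|_\infty\ge 1$ for $i\ne j$; $\mathcal{F}_k$ is the set of configurations. A trajectory over $T=[t_0,t_1]$ is a $1$-Lipschitz (w.r.t. $L_1$) map $m:T\to\mathbb{R}^2$ whose image is a polygonal chain; a schedule is a tuple $M=(m_1,\dots,m_k)$ of trajectories over $T$, feasible if $M(t)\in\mathcal{F}_k$ for all $t\in T$; its total traveled length $\Sigma(M)$ is the sum of the lengths of the chains $m_i[T]$. Min-Sum CMP: given $A,B\in\mathcal{F}_k$, find the minimum total traveled length of a feasible schedule from $A$ to $B$ (and such a schedule). *)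

(* Defs.v *)
From Stdlib Require Import Reals List ZArith.
Import ListNotations.
Open Scope R_scope.

Definition pt := (R * R)%type.
Definition psub (p q : pt) : pt := (fst p - fst q, snd p - snd q).
(** L1 norm (distances) and L_infinity norm (separation of unit squares). *)
Definition n1 (p : pt) : R := Rabs (fst p) + Rabs (snd p).
Definition ninf (p : pt) : R := Rmax (Rabs (fst p)) (Rabs (snd p)).

Definition config2 := (pt * pt)%type.
Definition valid_config (c : config2) : Prop := ninf (psub (fst c) (snd c)) >= 1.

Definition segment (p q : pt) (z : pt) : Prop :=
  exists l, 0 <= l <= 1 /\
    z = (fst p + l * (fst q - fst p), snd p + l * (snd q - snd p)).

Fixpoint chain_set (P : list pt) (z : pt) : Prop :=
  match P with
  | nil => False
  | [p] => z = p
  | p :: ((q :: _) as tl) => segment p q z \/ chain_set tl z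
  end.

Definition lipschitz1 (m : R -> pt) (t0 t1 : R) : Prop :=
  forall t t', t0 <= t <= t1 -> t0 <= t' <= t1 -> n1 (psub (m t) (m t')) <= Rabs (t - t').

Definition polygonal_image (m : R -> pt) (t0 t1 : R) : Prop :=
  exists P : list pt, forall z, (exists t, t0 <= t <= t1 /\ m t = z) <-> chain_set P z.

Definition trajectory (m : R -> pt) (t0 t1 : R) : Prop :=
  t0 <= t1 /\ lipschitz1 m t0 t1 /\ polygonal_image m t0 t1.

Fixpoint var_sum (m : R -> pt) (l : list R) : R :=
  match l with
  | a :: ((b :: _) as tl) => n1 (psub (m b) (m a)) + var_sum m tl
  | _ => 0
  end.

Fixpoint nondecr (l : list R) : Prop :=
  match l with
  | a :: ((b :: _) as tl) => a <= b /\ nondecr tl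
  | _ => True
  end.

Definition partition_of (t0 t1 : R) (l : list R) : Prop :=
  nondecr (t0 :: l) /\ last (t0 :: l) t0 = t1.

Definition traveled_length (m : R -> pt) (t0 t1 L : R) : Prop :=
  is_lub (fun v => exists l, partition_of t0 t1 l /\ v = var_sum m (t0 :: l)) L.

Definition feasible_schedule (A B : config2) (t0 t1 : R) (m1 m2 : R -> pt) : Prop :=
  trajectory m1 t0 t1 /\ trajectory m2 t0 t1 /\
  m1 t0 = fst A /\ m2 t0 = snd A /\ m1 t1 = fst B /\ m2 t1 = snd B /\
  (forall t, t0 <= t <= t1 -> valid_config (m1 t, m2 t)).

Definition schedule_cost (m1 m2 : R -> pt) (t0 t1 c : R) : Prop :=
  exists L1 L2, traveled_length m1 t0 t1 L1 /\ traveled_length m2 t0 t1 L2 /\ c = L1 + L2.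

Definition is_min_sum_value (A B : config2) (v : R) : Prop :=
  (exists t0 t1 m1 m2, feasible_schedule A B t0 t1 m1 m2 /\ schedule_cost m1 m2 t0 t1 v) /\
  (forall t0 t1 m1 m2 c, feasible_schedule A B t0 t1 m1 m2 ->
       schedule_cost m1 m2 t0 t1 c -> v <= c).

(** * Constant-time computations (real RAM)
    A fixed, input-independent expression with arithmetic operations and
    comparisons; evaluating it takes time bounded by its (constant) size. *)
Inductive rexp : Type :=
| RVar : nat -> rexp
| RConst : Z -> rexp
| RAdd : rexp -> rexp -> rexp
| RSub : rexp -> rexp -> rexp
| RMul : rexp -> rexp -> rexp
| RDiv : rexp -> rexp -> rexp
| RIfLe : rexp -> rexp -> rexp -> rexp -> rexp.

Fixpoint reval (env : nat -> R) (e : rexp) : R :=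
  match e with
  | RVar i => env i
  | RConst z => IZR z
  | RAdd a b => reval env a + reval env b
  | RSub a b => reval env a - reval env b
  | RMul a b => reval env a * reval env b
  | RDiv a b => reval env a / reval env b
  | RIfLe a b c d => if Rle_dec (reval env a) (reval env b) then reval env c else reval env d
  end.

Definition input_env (A B : config2) (i : nat) : R :=
  match i with
  | 0 => fst (fst A) | 1 => snd (fst A) | 2 => fst (snd A) | 3 => snd (snd A)
  | 4 => fst (fst B) | 5 => snd (fst B) | 6 => fst (snd B) | 7 => snd (snd B)
  | _ => 0
  end.

Definition wexp := (rexp * rexp * rexp * rexp)%type.
Definition weval (env : nat -> R) (w : wexp) : config2 :=
  match w with (a, b, c, d) => ((reval env a, reval env b), (reval env c, reval env d)) end.

Definition lerp (p q : pt) (l : R) : pt :=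
  (fst p + l * (fst q - fst p), snd p + l * (snd q - snd p)).

Definition realizes (N : nat) (tau : nat -> R) (W : nat -> config2) (m1 m2 : R -> pt) : Prop :=
  forall k, (k < N)%nat ->
    tau k <= tau (S k) /\
    forall t, tau k <= t <= tau (S k) ->
      let l := (t - tau k) / (tau (S k) - tau k) in
      m1 t = lerp (fst (W k)) (fst (W (S k))) l /\
      m2 t = lerp (snd (W k)) (snd (W (S k))) l.

(* Main.v *)
Require Import Defs.
From Stdlib Require Import Reals List ZArith Lra Lia Classical.
Import ListNotations.
Open Scope R_scope.

Ltac elim_abs := repeat match goal with
 | |- context [Rabs ?x] => let H := fresh "Hab" in destruct (Rcase_abs x) as [H|H];
      [rewrite (Rabs_left x H) in * | rewrite (Rabs_right x H) in *]
 | H0 : context [Rabs ?x] |- _ => let H := fresh "Hab" in destruct (Rcase_abs x) as [H|H];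
      [rewrite (Rabs_left x H) in * | rewrite (Rabs_right x H) in *]
 end.

Lemma n1_nonneg p : 0 <= n1 p.
Proof. unfold n1; pose proof (Rabs_pos (fst p)); pose proof (Rabs_pos (snd p)); lra. Qed.

Lemma n1_sym p q : n1 (psub p q) = n1 (psub q p).
Proof. unfold n1, psub; simpl. rewrite (Rabs_minus_sym (fst p)), (Rabs_minus_sym (snd p)); auto. Qed.

Lemma n1_tri x y z : n1 (psub z x) <= n1 (psub z y) + n1 (psub y x).
Proof.
  unfold n1, psub; simpl.
  pose proof (Rabs_triang (fst z - fst y) (fst y - fst x)).
  pose proof (Rabs_triang (snd z - snd y) (snd y - snd x)).
  replace (fst z - fst x) with ((fst z - fst y) + (fst y - fst x)) by ring.
  replace (snd z - snd x) with ((snd z - snd y) + (snd y - snd x)) by ring.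
  lra.
Qed.

Lemma n1_zero p q : n1 (psub q p) <= 0 -> q = p.
Proof.
  destruct p as [px py], q as [qx qy]; unfold n1, psub; simpl; intros H.
  elim_abs; f_equal; lra.
Qed.

Lemma n1_same p : n1 (psub p p) = 0.
Proof. unfold n1, psub; simpl. replace (fst p - fst p) with 0 by ring.
  replace (snd p - snd p) with 0 by ring. rewrite Rabs_R0; ring. Qed.

Definition lam (a b t : R) := (t - a) / (b - a).
Definition segf (p q : pt) (a b : R) (t : R) : pt := lerp p q (lam a b t).

Lemma lerp0 p q : lerp p q 0 = p.
Proof. destruct p, q; unfold lerp; simpl; f_equal; ring. Qed.
Lemma lerp1 p q : lerp p q 1 = q.
Proof. destruct p, q; unfold lerp; simpl; f_equal; ring. Qed.
Lemma lerp_same p l : lerp p p l = p.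
Proof. destruct p; unfold lerp; simpl; f_equal; ring. Qed.

Lemma n1_lerp p q l l' : n1 (psub (lerp p q l') (lerp p q l)) = Rabs (l' - l) * n1 (psub q p).
Proof.
  destruct p as [px py], q as [qx qy]; unfold n1, psub, lerp; simpl.
  replace (px + l' * (qx - px) - (px + l * (qx - px))) with ((l' - l) * (qx - px)) by ring.
  replace (py + l' * (qy - py) - (py + l * (qy - py))) with ((l' - l) * (qy - py)) by ring.
  rewrite !Rabs_mult; ring.
Qed.

Lemma lam_a a b : lam a b a = 0.
Proof. unfold lam, Rdiv. replace (a - a) with 0 by ring. ring. Qed.

Lemma lam_b a b : a < b -> lam a b b = 1.
Proof. intros; unfold lam; field; lra. Qed.

Lemma lam_deg a b t : a = b -> lam a b t = 0.
Proof. intros ->; unfold lam, Rdiv. replace (b - b) with 0 by ring. rewrite Rinv_0; ring. Qed.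

Lemma lam_range a b t : a <= t <= b -> 0 <= lam a b t <= 1.
Proof.
  intros H. destruct (Req_dec a b) as [E|E].
  - rewrite lam_deg by auto; lra.
  - unfold lam, Rdiv. assert (0 < b - a) by lra.
    pose proof (Rinv_0_lt_compat _ H0).
    assert ((b - a) * / (b - a) = 1) by (field; lra).
    split; nra.
Qed.

Lemma segf_start p q a b : segf p q a b a = p.
Proof. unfold segf; rewrite lam_a; apply lerp0. Qed.

Lemma segf_end p q a b : a <= b -> n1 (psub q p) <= b - a -> segf p q a b b = q.
Proof.
  intros H1 H2; unfold segf. destruct (Req_dec a b) as [E|E].
  - rewrite lam_deg by auto. subst. rewrite lerp0. symmetry; apply n1_zero; lra.
  - rewrite lam_b by lra; apply lerp1.
Qed.

Definition pw3 {X : Type} (t1 t2 : R) (f0 f1 f2 : R -> X) (t : R) : X :=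
  if Rle_dec t t1 then f0 t else if Rle_dec t t2 then f1 t else f2 t.

Lemma pw3_0 {X} t1 t2 (f0 f1 f2 : R -> X) t : t <= t1 -> pw3 t1 t2 f0 f1 f2 t = f0 t.
Proof. intros; unfold pw3; destruct (Rle_dec t t1); [auto | lra]. Qed.

Lemma pw3_1 {X} t1 t2 (f0 f1 f2 : R -> X) t : t1 <= t <= t2 -> f0 t1 = f1 t1 ->
  pw3 t1 t2 f0 f1 f2 t = f1 t.
Proof.
  intros H E; unfold pw3; destruct (Rle_dec t t1).
  - assert (t = t1) by lra; subst; auto.
  - destruct (Rle_dec t t2); [auto | lra].
Qed.

Lemma pw3_2 {X} t1 t2 (f0 f1 f2 : R -> X) t : t1 <= t2 -> t2 <= t -> f0 t1 = f1 t1 ->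
  f1 t2 = f2 t2 -> pw3 t1 t2 f0 f1 f2 t = f2 t.
Proof.
  intros H H' E E'; unfold pw3; destruct (Rle_dec t t1).
  - assert (Ht : t = t1) by lra; assert (Ht2 : t1 = t2) by lra; subst t. rewrite E. rewrite Ht2. exact E'.
  - destruct (Rle_dec t t2).
    + assert (t = t2) by lra; subst; auto.
    + auto.
Qed.

Definition CP (m : R -> pt) (g : R -> R) a b := forall t t', a <= t -> t <= t' -> t' <= b ->
  n1 (psub (m t') (m t)) <= g t' - g t /\ g t' - g t <= t' - t.

Lemma CP_glue m g a b c : CP m g a b -> CP m g b c -> CP m g a c.
Proof.
  intros H1 H2 t t' ? ? ?. destruct (Rle_dec t' b). { apply H1; lra. }
  destruct (Rle_dec b t). { apply H2; lra. }
  destruct (H1 t b) as [? ?]; try lra. destruct (H2 b t') as [? ?]; try lra.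
  pose proof (n1_tri (m t) (m b) (m t')). lra.
Qed.

Lemma CP_seg m g p q G a b : a <= b -> n1 (psub q p) <= b - a ->
  (forall t, a <= t <= b -> m t = segf p q a b t) ->
  (forall t, a <= t <= b -> g t = G + n1 (psub q p) * lam a b t) -> CP m g a b.
Proof.
  intros Hab He Hm Hg t t' H1 H2 H3.
  rewrite (Hm t), (Hm t'), (Hg t), (Hg t') by lra. unfold segf. rewrite n1_lerp.
  pose proof (n1_nonneg (psub q p)).
  destruct (Req_dec a b) as [E|E].
  - rewrite !lam_deg by auto. replace (0 - 0) with 0 by ring. rewrite Rabs_R0. lra.
  - unfold lam, Rdiv. assert (0 < b - a) by lra.
    pose proof (Rinv_0_lt_compat _ H0).
    assert ((b - a) * / (b - a) = 1) by (field; lra).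
    set (r := / (b - a)) in *.
    replace ((t' - a) * r - (t - a) * r) with ((t' - t) * r) by ring.
    rewrite Rabs_right by nra.
    split; [lra|].
    set (e := n1 (psub q p)) in *.
    replace (G + e * ((t' - a) * r) - (G + e * ((t - a) * r))) with ((t' - t) * (e * r)) by ring.
    assert (e * r <= 1) by nra. nra.
Qed.

Lemma CP_lip m g a b : CP m g a b -> lipschitz1 m a b.
Proof.
  intros H t t' Ht Ht'. destruct (Rle_dec t t').
  - destruct (H t t') as [? ?]; try lra. rewrite n1_sym. rewrite Rabs_left1 by lra. lra.
  - destruct (H t' t) as [? ?]; try lra. rewrite Rabs_right by lra. lra.
Qed.

Lemma last_def (y : R) l d d' : last (y :: l) d = last (y :: l) d'.
Proof. revert y; induction l as [|a l IH]; intros y; [reflexivity|].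
  change (last (a :: l) d = last (a :: l) d'). apply IH. Qed.

Lemma nondecr_last x l : nondecr (x :: l) -> x <= last (x :: l) x.
Proof.
  revert x; induction l as [|y l IH]; intros x H; [simpl; lra|].
  destruct H as [H1 H2]. specialize (IH y H2).
  change (x <= last (y :: l) x). rewrite (last_def y l x y). lra.
Qed.

Lemma CP_var m g a b : CP m g a b -> forall l x, a <= x -> nondecr (x :: l) ->
  last (x :: l) x <= b -> var_sum m (x :: l) <= g (last (x :: l) x) - g x.
Proof.
  intros H l; induction l as [|y l IH]; intros x Hx Hn Hl.
  - simpl. lra.
  - destruct Hn as [Hxy Hn].
    assert (E : last (x :: y :: l) x = last (y :: l) y).
    { change (last (y :: l) x = last (y :: l) y). apply last_def. }
    rewrite E in *. pose proof (nondecr_last y l Hn).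
    specialize (IH y ltac:(lra) Hn Hl).
    change (var_sum m (x :: y :: l)) with (n1 (psub (m y) (m x)) + var_sum m (y :: l)).
    destruct (H x y) as [? ?]; try lra.
Qed.

Lemma tl_ge m a b L : traveled_length m a b L -> a <= b -> forall t, a <= t <= b ->
  n1 (psub (m t) (m a)) + n1 (psub (m b) (m t)) <= L.
Proof.
  intros [H _] Hab t Ht. apply H. exists [t; b]. split.
  - split; simpl; [lra|auto].
  - simpl. ring.
Qed.

Lemma tl_ge0 m a b L : traveled_length m a b L -> a <= b -> n1 (psub (m b) (m a)) <= L.
Proof.
  intros H Hab. pose proof (tl_ge m a b L H Hab a ltac:(lra)). rewrite n1_same in H0. lra.
Qed.


Lemma gend a b e : a <= b -> 0 <= e <= b - a -> e * lam a b b = e.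
Proof.
  intros. destruct (Req_dec a b). { rewrite lam_deg by auto. subst. assert (e = 0) by lra. subst; ring. }
  rewrite lam_b by lra; ring.
Qed.

Lemma seg_pre m p q a b z : a <= b -> n1 (psub q p) <= b - a ->
  (forall t, a <= t <= b -> m t = segf p q a b t) -> segment p q z -> exists t, (a <= t <= b) /\ m t = z.
Proof.
  intros Hab He Hm [l [Hl Hz]].
  destruct (Req_dec a b) as [E|E].
  - subst b. assert (q = p) by (apply n1_zero; lra). subst q.
    exists a. split; [lra|]. rewrite Hm by lra. rewrite segf_start. rewrite Hz.
    destruct p; simpl; f_equal; ring.
  - exists (a + l * (b - a)). split; [nra|]. rewrite Hm by nra. unfold segf.
    replace (lam a b (a + l * (b - a))) with l. { rewrite Hz; reflexivity. }
    unfold lam; field; lra.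
Qed.

Lemma robot3 P0 P1 P2 P3 T0 T1 T2 T3 :
  T0 <= T1 -> T1 <= T2 -> T2 <= T3 -> n1 (psub P1 P0) <= T1 - T0 ->
  n1 (psub P2 P1) <= T2 - T1 -> n1 (psub P3 P2) <= T3 - T2 ->
  let m := pw3 T1 T2 (segf P0 P1 T0 T1) (segf P1 P2 T1 T2) (segf P2 P3 T2 T3) in
  (forall t, T0 <= t <= T1 -> m t = segf P0 P1 T0 T1 t) /\
  (forall t, T1 <= t <= T2 -> m t = segf P1 P2 T1 T2 t) /\
  (forall t, T2 <= t <= T3 -> m t = segf P2 P3 T2 T3 t) /\
  trajectory m T0 T3 /\ m T0 = P0 /\ m T3 = P3 /\
  traveled_length m T0 T3 (n1 (psub P1 P0) + n1 (psub P2 P1) + n1 (psub P3 P2)).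
Proof.
  intros H01 H12 H23 He0 He1 He2 m.
  pose proof (n1_nonneg (psub P1 P0)). pose proof (n1_nonneg (psub P2 P1)).
  pose proof (n1_nonneg (psub P3 P2)).
  set (e0 := n1 (psub P1 P0)) in *. set (e1 := n1 (psub P2 P1)) in *. set (e2 := n1 (psub P3 P2)) in *.
  assert (E1 : segf P0 P1 T0 T1 T1 = segf P1 P2 T1 T2 T1)
    by (rewrite segf_end, segf_start; auto).
  assert (E2 : segf P1 P2 T1 T2 T2 = segf P2 P3 T2 T3 T2)
    by (rewrite segf_end, segf_start; auto).
  assert (S0 : forall t, T0 <= t <= T1 -> m t = segf P0 P1 T0 T1 t)
    by (intros; apply pw3_0; lra).
  assert (S1 : forall t, T1 <= t <= T2 -> m t = segf P1 P2 T1 T2 t)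
    by (intros; apply pw3_1; auto).
  assert (S2 : forall t, T2 <= t <= T3 -> m t = segf P2 P3 T2 T3 t)
    by (intros; apply pw3_2; auto; lra).
  set (g := pw3 T1 T2 (fun t => 0 + e0 * lam T0 T1 t) (fun t => e0 + e1 * lam T1 T2 t)
                      (fun t => (e0 + e1) + e2 * lam T2 T3 t)).
  assert (G1 : (fun t => 0 + e0 * lam T0 T1 t) T1 = (fun t => e0 + e1 * lam T1 T2 t) T1).
  { simpl. rewrite lam_a, gend; auto; lra. }
  assert (G2 : (fun t => e0 + e1 * lam T1 T2 t) T2 = (fun t => (e0 + e1) + e2 * lam T2 T3 t) T2).
  { simpl. rewrite lam_a, gend; auto; lra. }
  assert (CP0 : CP m g T0 T1).
  { apply (CP_seg m g P0 P1 0 T0 T1); auto. intros; unfold g; rewrite pw3_0 by lra; reflexivity. }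
  assert (CP1 : CP m g T1 T2).
  { apply (CP_seg m g P1 P2 e0 T1 T2); auto. intros; unfold g; rewrite pw3_1; auto. }
  assert (CP2 : CP m g T2 T3).
  { apply (CP_seg m g P2 P3 (e0 + e1) T2 T3); auto. intros; unfold g; rewrite pw3_2; auto; lra. }
  assert (CPa : CP m g T0 T3) by (eapply CP_glue; [eapply CP_glue; eauto | eauto]).
  assert (M0 : m T0 = P0) by (rewrite S0 by lra; apply segf_start).
  assert (M3 : m T3 = P3) by (rewrite S2 by lra; apply segf_end; auto).
  assert (M1 : m T1 = P1) by (rewrite S1 by lra; apply segf_start).
  assert (M2 : m T2 = P2) by (rewrite S2 by lra; apply segf_start).
  assert (g0 : g T0 = 0).
  { unfold g. rewrite pw3_0 by lra. rewrite lam_a; ring. }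
  assert (g3 : g T3 = e0 + e1 + e2).
  { unfold g. rewrite pw3_2 by (auto; lra). rewrite gend; auto; lra. }
  split; [auto|]. split; [auto|]. split; [auto|].
  split; [|split; [auto|split; [auto|]]].
  - split; [lra|]. split; [eapply CP_lip; eauto|].
    exists [P0; P1; P2; P3]. intros z; split.
    + intros [t [Ht <-]]. simpl.
      destruct (Rle_dec t T1).
      * left. rewrite S0 by lra. exists (lam T0 T1 t). split; [apply lam_range; lra|reflexivity].
      * right. destruct (Rle_dec t T2).
        -- left. rewrite S1 by lra. exists (lam T1 T2 t). split; [apply lam_range; lra|reflexivity].
        -- right. left. rewrite S2 by lra. exists (lam T2 T3 t). split; [apply lam_range; lra|reflexivity].
    + simpl. intros [Hz|[Hz|[Hz|Hz]]].
      * destruct (seg_pre m P0 P1 T0 T1 z) as [t [? ?]]; auto. exists t; split; auto; lra.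
      * destruct (seg_pre m P1 P2 T1 T2 z) as [t [? ?]]; auto. exists t; split; auto; lra.
      * destruct (seg_pre m P2 P3 T2 T3 z) as [t [? ?]]; auto. exists t; split; auto; lra.
      * exists T3; split; [lra|]. rewrite M3; auto.
  - split.
    + intros v [l [[Hn Hl] ->]].
      pose proof (CP_var m g T0 T3 CPa l T0 ltac:(lra) Hn ltac:(rewrite Hl; lra)).
      rewrite Hl, g3, g0 in H2. lra.
    + intros M HM. apply HM. exists [T1; T2; T3]. split.
      * split; simpl; [repeat split; lra | auto].
      * simpl. rewrite M0, M1, M2, M3. fold e0 e1 e2. ring.
Qed.


Definition hsok (c u v : R) := 1 <= c \/ c <= -1 \/ (u <= -1 /\ v <= -1) \/ (1 <= u /\ 1 <= v).
Definition segok (d d' : pt) :=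
  (snd d = snd d' /\ hsok (snd d) (fst d) (fst d')) \/ (fst d = fst d' /\ hsok (fst d) (snd d) (snd d')).

Lemma ninf_ge x y : (1 <= x \/ x <= -1 \/ 1 <= y \/ y <= -1) -> ninf (x, y) >= 1.
Proof.
  intros H. unfold ninf; simpl.
  pose proof (Rmax_l (Rabs x) (Rabs y)). pose proof (Rmax_r (Rabs x) (Rabs y)).
  elim_abs; lra.
Qed.

Lemma segok_valid d d' l : segok d d' -> 0 <= l <= 1 -> ninf (lerp d d' l) >= 1.
Proof.
  destruct d as [dx dy], d' as [ex ey]; unfold segok, hsok, lerp; simpl.
  intros H Hl. apply ninf_ge.
  destruct H as [[E H]|[E H]]; subst.
  - replace (ey + l * (ey - ey)) with ey by ring.
    destruct H as [H|[H|[H|H]]]; [right; right; left; lra | right; right; right; lra | right; left; nra | left; nra].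
  - replace (ex + l * (ex - ex)) with ex by ring.
    destruct H as [H|[H|[H|H]]]; [left; lra | right; left; lra | right; right; right; nra | right; right; left; nra].
Qed.

Lemma psub_lerp a b c d l : psub (lerp a b l) (lerp c d l) = lerp (psub a c) (psub b d) l.
Proof. destruct a, b, c, d; unfold psub, lerp; simpl; f_equal; ring. Qed.

Definition dd (W : config2) : pt := psub (fst W) (snd W).
Definition dur (W W' : config2) : R := n1 (psub (fst W') (fst W)) + n1 (psub (snd W') (snd W)).

Lemma sched3 (tau : nat -> R) (W : nat -> config2) :
  tau 0%nat = 0 ->
  tau 1%nat = tau 0%nat + dur (W 0%nat) (W 1%nat) ->
  tau 2%nat = tau 1%nat + dur (W 1%nat) (W 2%nat) ->
  tau 3%nat = tau 2%nat + dur (W 2%nat) (W 3%nat) ->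
  segok (dd (W 0%nat)) (dd (W 1%nat)) -> segok (dd (W 1%nat)) (dd (W 2%nat)) ->
  segok (dd (W 2%nat)) (dd (W 3%nat)) ->
  exists m1 m2, realizes 3 tau W m1 m2 /\
    feasible_schedule (W 0%nat) (W 3%nat) (tau 0%nat) (tau 3%nat) m1 m2 /\
    schedule_cost m1 m2 (tau 0%nat) (tau 3%nat) (tau 3%nat).
Proof.
  unfold dur, dd. intros T0 T1 T2 T3 G0 G1 G2.
  pose proof (n1_nonneg (psub (fst (W 1%nat)) (fst (W 0%nat)))).
  pose proof (n1_nonneg (psub (fst (W 2%nat)) (fst (W 1%nat)))).
  pose proof (n1_nonneg (psub (fst (W 3%nat)) (fst (W 2%nat)))).
  pose proof (n1_nonneg (psub (snd (W 1%nat)) (snd (W 0%nat)))).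
  pose proof (n1_nonneg (psub (snd (W 2%nat)) (snd (W 1%nat)))).
  pose proof (n1_nonneg (psub (snd (W 3%nat)) (snd (W 2%nat)))).
  destruct (robot3 (fst (W 0%nat)) (fst (W 1%nat)) (fst (W 2%nat)) (fst (W 3%nat))
             (tau 0%nat) (tau 1%nat) (tau 2%nat) (tau 3%nat)) as [A0 [A1 [A2 [AT [AS [AE AL]]]]]]; try lra.
  destruct (robot3 (snd (W 0%nat)) (snd (W 1%nat)) (snd (W 2%nat)) (snd (W 3%nat))
             (tau 0%nat) (tau 1%nat) (tau 2%nat) (tau 3%nat)) as [B0 [B1 [B2 [BT [BS [BE BL]]]]]]; try lra.
  set (m1 := pw3 (tau 1%nat) (tau 2%nat) (segf (fst (W 0%nat)) (fst (W 1%nat)) (tau 0%nat) (tau 1%nat))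
        (segf (fst (W 1%nat)) (fst (W 2%nat)) (tau 1%nat) (tau 2%nat))
        (segf (fst (W 2%nat)) (fst (W 3%nat)) (tau 2%nat) (tau 3%nat))) in *.
  set (m2 := pw3 (tau 1%nat) (tau 2%nat) (segf (snd (W 0%nat)) (snd (W 1%nat)) (tau 0%nat) (tau 1%nat))
        (segf (snd (W 1%nat)) (snd (W 2%nat)) (tau 1%nat) (tau 2%nat))
        (segf (snd (W 2%nat)) (snd (W 3%nat)) (tau 2%nat) (tau 3%nat))) in *.
  exists m1, m2. split; [|split].
  - intros k Hk. destruct k as [|[|[|k]]]; [| | | lia].
    + split; [lra|]. intros t Ht. split; [apply A0 | apply B0]; auto.
    + split; [lra|]. intros t Ht. split; [apply A1 | apply B1]; auto.
    + split; [lra|]. intros t Ht. split; [apply A2 | apply B2]; auto.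
  - split; [auto|]. split; [auto|]. repeat (split; [auto|]).
    intros t Ht. unfold valid_config; simpl.
    destruct (Rle_dec t (tau 1%nat)).
    + rewrite A0, B0 by lra. unfold segf. rewrite psub_lerp. apply segok_valid; auto.
      apply lam_range; lra.
    + destruct (Rle_dec t (tau 2%nat)).
      * rewrite A1, B1 by lra. unfold segf. rewrite psub_lerp. apply segok_valid; auto.
        apply lam_range; lra.
      * rewrite A2, B2 by lra. unfold segf. rewrite psub_lerp. apply segok_valid; auto.
        apply lam_range; lra.
  - eexists; eexists; split; [exact AL|]. split; [exact BL|]. lra.
Qed.


Lemma LB_mid A B t0 t1 m1 m2 c : feasible_schedule A B t0 t1 m1 m2 ->
  schedule_cost m1 m2 t0 t1 c -> forall t, t0 <= t <= t1 ->
  n1 (psub (m1 t) (fst A)) + n1 (psub (fst B) (m1 t)) +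
  n1 (psub (m2 t) (snd A)) + n1 (psub (snd B) (m2 t)) <= c.
Proof.
  intros [[Ht _] [_ [E1 [E2 [E3 [E4 _]]]]]] [L1 [L2 [H1 [H2 ->]]]] t Ht'.
  pose proof (tl_ge m1 t0 t1 L1 H1 Ht t Ht'). pose proof (tl_ge m2 t0 t1 L2 H2 Ht t Ht').
  rewrite E1, E3 in H. rewrite E2, E4 in H0. lra.
Qed.

Lemma LB_end A B t0 t1 m1 m2 c : feasible_schedule A B t0 t1 m1 m2 ->
  schedule_cost m1 m2 t0 t1 c ->
  n1 (psub (fst B) (fst A)) + n1 (psub (snd B) (snd A)) <= c.
Proof.
  intros HF HC. pose proof HF as [[Ht _] _].
  pose proof (LB_mid A B t0 t1 m1 m2 c HF HC t0 ltac:(lra)) as H.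
  destruct HF as [_ [_ [E1 [E2 _]]]]. rewrite E1, E2, !n1_same in H. lra.
Qed.

Definition clampT (t0 t1 t : R) := Rmax t0 (Rmin t t1).

Lemma clampT_lip t0 t1 a b : t0 <= t1 -> Rabs (clampT t0 t1 a - clampT t0 t1 b) <= Rabs (a - b).
Proof.
  intros. unfold clampT, Rmax, Rmin.
  repeat (destruct Rle_dec); elim_abs; lra.
Qed.

Lemma clampT_in t0 t1 a : t0 <= t1 -> t0 <= clampT t0 t1 a <= t1.
Proof. intros. unfold clampT, Rmax, Rmin. repeat (destruct Rle_dec); lra. Qed.

Lemma clampT_id t0 t1 a : t0 <= a <= t1 -> clampT t0 t1 a = a.
Proof. intros. unfold clampT, Rmax, Rmin. repeat (destruct Rle_dec); lra. Qed.

Lemma lip_cont (f : R -> R) (K : R) : 0 < K -> (forall a b, Rabs (f a - f b) <= K * Rabs (a - b)) -> continuity f.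
Proof.
  intros HK H x. unfold continuity_pt, continue_in, limit1_in, limit_in.
  intros eps Heps. exists (eps / K). split.
  { apply Rdiv_lt_0_compat; lra. }
  intros y [_ Hy]. simpl in *. unfold R_dist in *.
  pose proof (H y x).
  assert (K * Rabs (y - x) < K * (eps / K)) by (apply Rmult_lt_compat_l; lra).
  replace (K * (eps / K)) with eps in H1 by (field; lra). lra.
Qed.

Lemma IVT_coord A B t0 t1 m1 m2 (pr : pt -> R) :
  (forall p q, Rabs (pr p - pr q) <= n1 (psub p q)) ->
  (forall p q, pr (psub p q) = pr p - pr q) ->
  feasible_schedule A B t0 t1 m1 m2 ->
  pr (dd A) * pr (dd B) <= 0 ->
  exists t, t0 <= t <= t1 /\ pr (m1 t) = pr (m2 t).
Proof.
  intros Hpr Hsub [[Ht [L1 _]] [[_ [L2 _]] [E1 [E2 [E3 [E4 _]]]]]] Hs.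
  set (h := fun t => pr (m1 (clampT t0 t1 t)) - pr (m2 (clampT t0 t1 t))).
  assert (Hc : continuity h).
  { apply (lip_cont h 2); [lra|]. intros a b. unfold h.
    pose proof (clampT_lip t0 t1 a b Ht). pose proof (clampT_in t0 t1 a Ht). pose proof (clampT_in t0 t1 b Ht).
    set (ca := clampT t0 t1 a) in *. set (cb := clampT t0 t1 b) in *.
    pose proof (Hpr (m1 ca) (m1 cb)). pose proof (Hpr (m2 ca) (m2 cb)).
    pose proof (L1 ca cb ltac:(lra) ltac:(lra)). pose proof (L2 ca cb ltac:(lra) ltac:(lra)).
    pose proof (Rabs_triang (pr (m1 ca) - pr (m1 cb)) (- (pr (m2 ca) - pr (m2 cb)))).
    rewrite Rabs_Ropp in H6.
    replace (pr (m1 ca) - pr (m2 ca) - (pr (m1 cb) - pr (m2 cb))) with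
      ((pr (m1 ca) - pr (m1 cb)) + - (pr (m2 ca) - pr (m2 cb))) by ring.
    pose proof (Rabs_pos (a - b)). lra. }
  destruct (IVT_cor h t0 t1 Hc Ht) as [z [Hz Hz0]].
  { unfold h. rewrite !clampT_id by lra. rewrite E1, E2, E3, E4.
    unfold dd in Hs. rewrite !Hsub in Hs. exact Hs. }
  exists z. split; auto. unfold h in Hz0. rewrite clampT_id in Hz0 by lra. lra.
Qed.

Lemma IVT_x A B t0 t1 m1 m2 : feasible_schedule A B t0 t1 m1 m2 ->
  fst (dd A) * fst (dd B) <= 0 -> exists t, t0 <= t <= t1 /\ fst (m1 t) = fst (m2 t).
Proof.
  apply IVT_coord.
  - intros p q. unfold n1, psub; simpl. pose proof (Rabs_pos (snd p - snd q)). lra.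
  - reflexivity.
Qed.

Lemma IVT_y A B t0 t1 m1 m2 : feasible_schedule A B t0 t1 m1 m2 ->
  snd (dd A) * snd (dd B) <= 0 -> exists t, t0 <= t <= t1 /\ snd (m1 t) = snd (m2 t).
Proof.
  apply IVT_coord.
  - intros p q. unfold n1, psub; simpl. pose proof (Rabs_pos (fst p - fst q)). lra.
  - reflexivity.
Qed.

Lemma feas_valid A B t0 t1 m1 m2 t : feasible_schedule A B t0 t1 m1 m2 -> t0 <= t <= t1 ->
  ninf (psub (m1 t) (m2 t)) >= 1.
Proof. intros [_ [_ [_ [_ [_ [_ H]]]]]] Ht. apply (H t Ht). Qed.


Definition ystar (s : R) := if Rle_dec 0 s then 1 else -1.
Definition sigm (a1 a2 b1 b2 : R) :=
  let ys := ystar ((a1 - a2) + (b1 - b2)) in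
  let u := Rabs (ys - (a1 - a2)) in
  (a1 + a2) + Rmax (- u) (Rmin ((b1 + b2) - (a1 + a2)) u).

Lemma maxid p q : Rabs ((p + q) / 2) + Rabs ((p - q) / 2) = Rmax (Rabs p) (Rabs q).
Proof. unfold Rmax; destruct Rle_dec; elim_abs; lra. Qed.

Lemma ylemma a1 a2 b1 b2 z1 z2 :
  -1 < a1 - a2 < 1 -> -1 < b1 - b2 < 1 -> 1 <= Rabs (z1 - z2) ->
  let ys := ystar ((a1 - a2) + (b1 - b2)) in
  let s := sigm a1 a2 b1 b2 in
  Rabs ((s + ys) / 2 - a1) + Rabs ((s - ys) / 2 - a2) + Rabs (b1 - (s + ys) / 2) + Rabs (b2 - (s - ys) / 2)
  <= Rabs (z1 - a1) + Rabs (b1 - z1) + Rabs (z2 - a2) + Rabs (b2 - z2).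
Proof.
  intros Ha Hb Hz ys s.
  set (al := a1 + a2). set (be := b1 + b2). set (ay := a1 - a2). set (by_ := b1 - b2).
  assert (E1 : (s + ys) / 2 - a1 = ((s - al) + (ys - ay)) / 2) by (unfold al, ay; field).
  assert (E2 : (s - ys) / 2 - a2 = ((s - al) - (ys - ay)) / 2) by (unfold al, ay; field).
  assert (E3 : b1 - (s + ys) / 2 = ((be - s) + (by_ - ys)) / 2) by (unfold be, by_; field).
  assert (E4 : b2 - (s - ys) / 2 = ((be - s) - (by_ - ys)) / 2) by (unfold be, by_; field).
  rewrite E1, E2, E3, E4.
  pose proof (maxid (s - al) (ys - ay)). pose proof (maxid (be - s) (by_ - ys)).
  enough (Rmax (Rabs (s - al)) (Rabs (ys - ay)) + Rmax (Rabs (be - s)) (Rabs (by_ - ys)) <=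
     Rabs (z1 - a1) + Rabs (b1 - z1) + Rabs (z2 - a2) + Rabs (b2 - z2)) by lra.
  clear H H0.
  assert (L1 : Rabs (be - al) <= Rabs (z1 - a1) + Rabs (b1 - z1) + Rabs (z2 - a2) + Rabs (b2 - z2)).
  { unfold be, al. clear -Ha. elim_abs; lra. }
  assert (L2 : Rabs (ys - ay) + Rabs (by_ - ys) <= Rabs (z1 - a1) + Rabs (b1 - z1) + Rabs (z2 - a2) + Rabs (b2 - z2)).
  { assert (Rabs ((z1 - z2) - ay) + Rabs (by_ - (z1 - z2)) <= Rabs (z1 - a1) + Rabs (b1 - z1) + Rabs (z2 - a2) + Rabs (b2 - z2)).
    { unfold ay, by_. clear. elim_abs; lra. }
    assert (Rabs (ys - ay) + Rabs (by_ - ys) <= Rabs ((z1 - z2) - ay) + Rabs (by_ - (z1 - z2))).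
    { unfold ys, ystar. destruct Rle_dec; elim_abs; lra. }
    lra. }
  set (RHS := Rabs (z1 - a1) + Rabs (b1 - z1) + Rabs (z2 - a2) + Rabs (b2 - z2)) in *.
  assert (Es : s = al + Rmax (- Rabs (ys - ay)) (Rmin (be - al) (Rabs (ys - ay)))) by reflexivity.
  rewrite Es. clear Es E1 E2 E3 E4 Hz.
  set (u := Rabs (ys - ay)) in *. set (w := Rabs (by_ - ys)) in *.
  assert (0 <= u) by apply Rabs_pos. assert (0 <= w) by apply Rabs_pos.
  unfold Rmax at 3, Rmin. repeat destruct Rle_dec;
  unfold Rmax; repeat destruct Rle_dec; elim_abs; lra.
Qed.


Definition LRc ax ay bx by_ := ((ax <= -1 /\ 1 <= bx) \/ (1 <= ax /\ bx <= -1)) /\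
  ((-1 < ay /\ ay < 1) /\ (-1 < by_ /\ by_ < 1)).
Definition XFc ax ay bx by_ := hsok ay ax bx /\ hsok bx ay by_.

Lemma case_cover ax ay bx by_ :
  (ax <= -1 \/ 1 <= ax \/ ay <= -1 \/ 1 <= ay) ->
  (bx <= -1 \/ 1 <= bx \/ by_ <= -1 \/ 1 <= by_) ->
  ~ LRc ax ay bx by_ -> ~ LRc ay ax by_ bx -> ~ XFc ax ay bx by_ -> XFc ay ax by_ bx.
Proof.
  unfold LRc, XFc, hsok. intros.
  destruct (Rle_lt_dec ax (-1)); destruct (Rle_lt_dec 1 ax);
  destruct (Rle_lt_dec ay (-1)); destruct (Rle_lt_dec 1 ay);
  destruct (Rle_lt_dec bx (-1)); destruct (Rle_lt_dec 1 bx);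
  destruct (Rle_lt_dec by_ (-1)); destruct (Rle_lt_dec 1 by_);
  try lra; tauto.
Qed.

Lemma ninf_cases x y : ninf (x, y) >= 1 -> (x <= -1 \/ 1 <= x \/ y <= -1 \/ 1 <= y).
Proof. unfold ninf, Rmax; simpl. destruct Rle_dec; elim_abs; lra. Qed.

Lemma segok_refl d : ninf d >= 1 -> segok d d.
Proof.
  destruct d as [x y]. intros H. apply ninf_cases in H. unfold segok, hsok; simpl.
  destruct H as [H|[H|[H|H]]]; [right|right|left|left]; split; auto; lra.
Qed.

Ltac zero_diag := repeat rewrite Rminus_diag; repeat rewrite Rabs_R0.

Lemma case_XF a1x a1y a2x a2y b1x b1y b2x b2y :
  let A := ((a1x, a1y), (a2x, a2y)) in let B := ((b1x, b1y), (b2x, b2y)) in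
  valid_config B ->
  XFc (a1x - a2x) (a1y - a2y) (b1x - b2x) (b1y - b2y) ->
  let W1 := ((b1x, a1y), (b2x, a2y)) in
  segok (dd A) (dd W1) /\ segok (dd W1) (dd B) /\ segok (dd B) (dd B) /\
  forall t0 t1 m1 m2 c, feasible_schedule A B t0 t1 m1 m2 -> schedule_cost m1 m2 t0 t1 c ->
    dur A W1 + dur W1 B + dur B B <= c.
Proof.
  intros A B HB [H1 H2] W1. split; [|split; [|split]].
  - left. unfold dd; simpl. split; auto.
  - right. unfold dd; simpl. split; auto.
  - apply segok_refl. exact HB.
  - intros t0 t1 m1 m2 c HF HC. pose proof (LB_end A B t0 t1 m1 m2 c HF HC).
    unfold dur, n1, psub in *; simpl in *. zero_diag. lra.
Qed.

Lemma case_YF a1x a1y a2x a2y b1x b1y b2x b2y :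
  let A := ((a1x, a1y), (a2x, a2y)) in let B := ((b1x, b1y), (b2x, b2y)) in
  valid_config B ->
  XFc (a1y - a2y) (a1x - a2x) (b1y - b2y) (b1x - b2x) ->
  let W1 := ((a1x, b1y), (a2x, b2y)) in
  segok (dd A) (dd W1) /\ segok (dd W1) (dd B) /\ segok (dd B) (dd B) /\
  forall t0 t1 m1 m2 c, feasible_schedule A B t0 t1 m1 m2 -> schedule_cost m1 m2 t0 t1 c ->
    dur A W1 + dur W1 B + dur B B <= c.
Proof.
  intros A B HB [H1 H2] W1. split; [|split; [|split]].
  - right. unfold dd; simpl. split; auto.
  - left. unfold dd; simpl. split; auto.
  - apply segok_refl. exact HB.
  - intros t0 t1 m1 m2 c HF HC. pose proof (LB_end A B t0 t1 m1 m2 c HF HC).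
    unfold dur, n1, psub in *; simpl in *. zero_diag. lra.
Qed.

Lemma case_LR a1x a1y a2x a2y b1x b1y b2x b2y :
  let A := ((a1x, a1y), (a2x, a2y)) in let B := ((b1x, b1y), (b2x, b2y)) in
  LRc (a1x - a2x) (a1y - a2y) (b1x - b2x) (b1y - b2y) ->
  let ys := ystar ((a1y - a2y) + (b1y - b2y)) in let s := sigm a1y a2y b1y b2y in
  let W1 := ((a1x, (s + ys) / 2), (a2x, (s - ys) / 2)) in
  let W2 := ((b1x, (s + ys) / 2), (b2x, (s - ys) / 2)) in
  segok (dd A) (dd W1) /\ segok (dd W1) (dd W2) /\ segok (dd W2) (dd B) /\
  forall t0 t1 m1 m2 c, feasible_schedule A B t0 t1 m1 m2 -> schedule_cost m1 m2 t0 t1 c ->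
    dur A W1 + dur W1 W2 + dur W2 B <= c.
Proof.
  intros A B HL ys s W1 W2.
  assert (Hys : ys = 1 \/ ys = -1) by (unfold ys, ystar; destruct Rle_dec; auto).
  destruct HL as [HX [HA HB']].
  split; [|split; [|split]].
  - right. unfold dd, hsok; simpl. split; auto. lra.
  - left. unfold dd, hsok; simpl. split; auto.
    replace ((s + ys) / 2 - (s - ys) / 2) with ys by field. lra.
  - right. unfold dd, hsok; simpl. split; auto. lra.
  - intros t0 t1 m1 m2 c HF HC.
    destruct (IVT_x A B t0 t1 m1 m2 HF) as [t [Ht Heq]].
    { unfold dd; simpl. nra. }
    pose proof (LB_mid A B t0 t1 m1 m2 c HF HC t Ht) as HM.
    pose proof (feas_valid A B t0 t1 m1 m2 t HF Ht) as HV.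
    destruct (m1 t) as [x1 y1], (m2 t) as [x2 y2]. simpl in Heq. subst x2.
    unfold ninf, psub in HV; simpl in HV. rewrite Rminus_diag, Rabs_R0 in HV.
    assert (Hz : 1 <= Rabs (y1 - y2)).
    { unfold Rmax in HV. destruct Rle_dec; pose proof (Rabs_pos (y1 - y2)); lra. }
    pose proof (ylemma a1y a2y b1y b2y y1 y2 HA HB' Hz) as HY. simpl in HY. fold ys s in HY.
    pose proof (Rabs_triang (x1 - a1x) (b1x - x1)). pose proof (Rabs_triang (x1 - a2x) (b2x - x1)).
    replace (x1 - a1x + (b1x - x1)) with (b1x - a1x) in H by ring.
    replace (x1 - a2x + (b2x - x1)) with (b2x - a2x) in H0 by ring.
    unfold dur, n1, psub in *; simpl in *. zero_diag. lra.
Qed.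

Lemma case_TB a1x a1y a2x a2y b1x b1y b2x b2y :
  let A := ((a1x, a1y), (a2x, a2y)) in let B := ((b1x, b1y), (b2x, b2y)) in
  LRc (a1y - a2y) (a1x - a2x) (b1y - b2y) (b1x - b2x) ->
  let xs := ystar ((a1x - a2x) + (b1x - b2x)) in let s := sigm a1x a2x b1x b2x in
  let W1 := (((s + xs) / 2, a1y), ((s - xs) / 2, a2y)) in
  let W2 := (((s + xs) / 2, b1y), ((s - xs) / 2, b2y)) in
  segok (dd A) (dd W1) /\ segok (dd W1) (dd W2) /\ segok (dd W2) (dd B) /\
  forall t0 t1 m1 m2 c, feasible_schedule A B t0 t1 m1 m2 -> schedule_cost m1 m2 t0 t1 c ->
    dur A W1 + dur W1 W2 + dur W2 B <= c.
Proof.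
  intros A B HL xs s W1 W2.
  assert (Hxs : xs = 1 \/ xs = -1) by (unfold xs, ystar; destruct Rle_dec; auto).
  destruct HL as [HX [HA HB']].
  split; [|split; [|split]].
  - left. unfold dd, hsok; simpl. split; auto. lra.
  - right. unfold dd, hsok; simpl. split; auto.
    replace ((s + xs) / 2 - (s - xs) / 2) with xs by field. lra.
  - left. unfold dd, hsok; simpl. split; auto. lra.
  - intros t0 t1 m1 m2 c HF HC.
    destruct (IVT_y A B t0 t1 m1 m2 HF) as [t [Ht Heq]].
    { unfold dd; simpl. nra. }
    pose proof (LB_mid A B t0 t1 m1 m2 c HF HC t Ht) as HM.
    pose proof (feas_valid A B t0 t1 m1 m2 t HF Ht) as HV.
    destruct (m1 t) as [x1 y1], (m2 t) as [x2 y2]. simpl in Heq. subst y2.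
    unfold ninf, psub in HV; simpl in HV. rewrite Rminus_diag, Rabs_R0 in HV.
    assert (Hz : 1 <= Rabs (x1 - x2)).
    { unfold Rmax in HV. destruct Rle_dec; pose proof (Rabs_pos (x1 - x2)); lra. }
    pose proof (ylemma a1x a2x b1x b2x x1 x2 HA HB' Hz) as HY. simpl in HY. fold xs s in HY.
    pose proof (Rabs_triang (y1 - a1y) (b1y - y1)). pose proof (Rabs_triang (y1 - a2y) (b2y - y1)).
    replace (y1 - a1y + (b1y - y1)) with (b1y - a1y) in H by ring.
    replace (y1 - a2y + (b2y - y1)) with (b2y - a2y) in H0 by ring.
    unfold dur, n1, psub in *; simpl in *. zero_diag. lra.
Qed.


Inductive cnd := CLe (a b : rexp) | CLt (a b : rexp) | CAnd (c d : cnd) | COr (c d : cnd).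

Fixpoint cev (env : nat -> R) (c : cnd) : Prop :=
  match c with
  | CLe a b => reval env a <= reval env b
  | CLt a b => reval env a < reval env b
  | CAnd c d => cev env c /\ cev env d
  | COr c d => cev env c \/ cev env d
  end.

Fixpoint ite (c : cnd) (x y : rexp) : rexp :=
  match c with
  | CLe a b => RIfLe a b x y
  | CLt a b => RIfLe b a y x
  | CAnd c d => ite c (ite d x y) y
  | COr c d => ite c x (ite d x y)
  end.

Lemma ite_spec env c : forall x y,
  (cev env c -> reval env (ite c x y) = reval env x) /\
  (~ cev env c -> reval env (ite c x y) = reval env y).
Proof.
  induction c as [a b|a b|c IHc d IHd|c IHc d IHd]; intros x y; simpl.
  - destruct Rle_dec; split; intros; auto; contradiction.
  - destruct Rle_dec; split; intros; auto; lra.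
  - split; intros H.
    + destruct H as [H1 H2]. rewrite (proj1 (IHc _ _) H1). apply (proj1 (IHd _ _) H2).
    + destruct (classic (cev env c)) as [H1|H1].
      * rewrite (proj1 (IHc _ _) H1). apply (proj2 (IHd _ _)). tauto.
      * apply (proj2 (IHc _ _) H1).
  - split; intros H.
    + destruct (classic (cev env c)) as [H1|H1].
      * apply (proj1 (IHc _ _) H1).
      * rewrite (proj2 (IHc _ _) H1). apply (proj1 (IHd _ _)). tauto.
    + rewrite (proj2 (IHc _ _)) by tauto. apply (proj2 (IHd _ _)). tauto.
Qed.

Definition c0 := RConst 0.
Definition c1 := RConst 1.
Definition cm1 := RConst (-1).
Definition c2 := RConst 2.
Definition eabs e := RIfLe c0 e e (RSub c0 e).
Definition emax a b := RIfLe a b b a.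
Definition emin a b := RIfLe a b a b.

Lemma reval_eabs env e : reval env (eabs e) = Rabs (reval env e).
Proof. unfold eabs; simpl. destruct Rle_dec; elim_abs; lra. Qed.

Definition eX1 := RVar 0. Definition eY1 := RVar 1. Definition eX2 := RVar 2. Definition eY2 := RVar 3.
Definition fX1 := RVar 4. Definition fY1 := RVar 5. Definition fX2 := RVar 6. Definition fY2 := RVar 7.
Definition eax := RSub eX1 eX2. Definition eay := RSub eY1 eY2.
Definition ebx := RSub fX1 fX2. Definition eby := RSub fY1 fY2.

Definition ehs c u v := COr (COr (CLe c1 c) (CLe c cm1))
  (COr (CAnd (CLe u cm1) (CLe v cm1)) (CAnd (CLe c1 u) (CLe c1 v))).
Definition eLR ax ay bx by_ := CAnd (COr (CAnd (CLe ax cm1) (CLe c1 bx)) (CAnd (CLe c1 ax) (CLe bx cm1)))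
  (CAnd (CAnd (CLt cm1 ay) (CLt ay c1)) (CAnd (CLt cm1 by_) (CLt by_ c1))).
Definition cLR := eLR eax eay ebx eby.
Definition cTB := eLR eay eax eby ebx.
Definition cXF := CAnd (ehs eay eax ebx) (ehs ebx eay eby).

Lemma cev_ehs env c u v : cev env (ehs c u v) <-> hsok (reval env c) (reval env u) (reval env v).
Proof. unfold ehs, hsok; simpl. tauto. Qed.
Lemma cev_eLR env ax ay bx by_ : cev env (eLR ax ay bx by_) <->
  LRc (reval env ax) (reval env ay) (reval env bx) (reval env by_).
Proof. unfold eLR, LRc; simpl. tauto. Qed.

Definition eys a1 a2 b1 b2 := RIfLe c0 (RAdd (RSub a1 a2) (RSub b1 b2)) c1 cm1.
Definition esig a1 a2 b1 b2 :=
  RAdd (RAdd a1 a2) (emax (RSub c0 (eabs (RSub (eys a1 a2 b1 b2) (RSub a1 a2))))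
                          (emin (RSub (RAdd b1 b2) (RAdd a1 a2)) (eabs (RSub (eys a1 a2 b1 b2) (RSub a1 a2))))).

Lemma reval_eys env a1 a2 b1 b2 : reval env (eys a1 a2 b1 b2) =
  ystar ((reval env a1 - reval env a2) + (reval env b1 - reval env b2)).
Proof. reflexivity. Qed.

Lemma reval_esig env a1 a2 b1 b2 : reval env (esig a1 a2 b1 b2) =
  sigm (reval env a1) (reval env a2) (reval env b1) (reval env b2).
Proof.
  unfold esig, sigm, emax, emin. cbn [reval]. rewrite reval_eabs. cbn [reval]. rewrite reval_eys.
  change (reval env c0) with 0. rewrite Rminus_0_l.
  reflexivity.
Qed.

Definition Ym1 := RDiv (RAdd (esig eY1 eY2 fY1 fY2) (eys eY1 eY2 fY1 fY2)) c2.
Definition Ym2 := RDiv (RSub (esig eY1 eY2 fY1 fY2) (eys eY1 eY2 fY1 fY2)) c2.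
Definition Xm1 := RDiv (RAdd (esig eX1 eX2 fX1 fX2) (eys eX1 eX2 fX1 fX2)) c2.
Definition Xm2 := RDiv (RSub (esig eX1 eX2 fX1 fX2) (eys eX1 eX2 fX1 fX2)) c2.

Definition sel4 a b c d := ite cLR c (ite cTB d (ite cXF a b)).

Definition wsel4 (wa wb wc wd : wexp) : wexp :=
  match wa, wb, wc, wd with
  | (a1, a2, a3, a4), (b1, b2, b3, b4), (c1, c2, c3, c4), (d1, d2, d3, d4) =>
    (sel4 a1 b1 c1 d1, sel4 a2 b2 c2 d2, sel4 a3 b3 c3 d3, sel4 a4 b4 c4 d4)
  end.

Definition ew0 : wexp := (eX1, eY1, eX2, eY2).
Definition ew3 : wexp := (fX1, fY1, fX2, fY2).
Definition ew1 : wexp := wsel4 (fX1, eY1, fX2, eY2) (eX1, fY1, eX2, fY2)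
                               (eX1, Ym1, eX2, Ym2) (Xm1, eY1, Xm2, eY2).
Definition ew2 : wexp := wsel4 ew3 ew3 (fX1, Ym1, fX2, Ym2) (Xm1, fY1, Xm2, fY2).

Definition edur (wa wb : wexp) : rexp :=
  match wa, wb with
  | (a1, a2, a3, a4), (b1, b2, b3, b4) =>
    RAdd (RAdd (eabs (RSub b1 a1)) (eabs (RSub b2 a2))) (RAdd (eabs (RSub b3 a3)) (eabs (RSub b4 a4)))
  end.

Lemma reval_edur env wa wb : reval env (edur wa wb) = dur (weval env wa) (weval env wb).
Proof.
  destruct wa as [[[a1 a2] a3] a4], wb as [[[b1 b2] b3] b4].
  unfold edur, dur, n1, psub. cbn [reval weval fst snd]. rewrite !reval_eabs. cbn [reval]. reflexivity.
Qed.

Definition et0 := c0.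
Definition et1 := RAdd et0 (edur ew0 ew1).
Definition et2 := RAdd et1 (edur ew1 ew2).
Definition et3 := RAdd et2 (edur ew2 ew3).
Definition etau (k : nat) : rexp := match k with 0 => et0 | 1 => et1 | 2 => et2 | _ => et3 end.
Definition ew (k : nat) : wexp := match k with 0 => ew0 | 1 => ew1 | 2 => ew2 | _ => ew3 end.

Lemma sel_LR env a b c d : cev env cLR -> reval env (sel4 a b c d) = reval env c.
Proof. intros H. unfold sel4. apply (proj1 (ite_spec env cLR _ _) H). Qed.
Lemma sel_TB env a b c d : ~ cev env cLR -> cev env cTB -> reval env (sel4 a b c d) = reval env d.
Proof. intros H H'. unfold sel4. rewrite (proj2 (ite_spec env cLR _ _) H). apply (proj1 (ite_spec env cTB _ _) H'). Qed.
Lemma sel_XF env a b c d : ~ cev env cLR -> ~ cev env cTB -> cev env cXF -> reval env (sel4 a b c d) = reval env a.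
Proof. intros H H' H''. unfold sel4. rewrite (proj2 (ite_spec env cLR _ _) H).
  rewrite (proj2 (ite_spec env cTB _ _) H'). apply (proj1 (ite_spec env cXF _ _) H''). Qed.
Lemma sel_YF env a b c d : ~ cev env cLR -> ~ cev env cTB -> ~ cev env cXF -> reval env (sel4 a b c d) = reval env b.
Proof. intros H H' H''. unfold sel4. rewrite (proj2 (ite_spec env cLR _ _) H).
  rewrite (proj2 (ite_spec env cTB _ _) H'). apply (proj2 (ite_spec env cXF _ _) H''). Qed.



Lemma finish (env : nat -> R) (A B W1 W2 : config2) :
  weval env ew0 = A -> weval env ew1 = W1 -> weval env ew2 = W2 -> weval env ew3 = B ->
  segok (dd A) (dd W1) -> segok (dd W1) (dd W2) -> segok (dd W2) (dd B) ->
  (forall t0 t1 m1 m2 c, feasible_schedule A B t0 t1 m1 m2 -> schedule_cost m1 m2 t0 t1 c ->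
    dur A W1 + dur W1 W2 + dur W2 B <= c) ->
  is_min_sum_value A B (reval env (etau 3)) /\
  exists m1 m2 : R -> pt,
    realizes 3 (fun k => reval env (etau k)) (fun k => weval env (ew k)) m1 m2 /\
    feasible_schedule A B (reval env (etau 0)) (reval env (etau 3)) m1 m2 /\
    schedule_cost m1 m2 (reval env (etau 0)) (reval env (etau 3)) (reval env (etau 3)).
Proof.
  intros E0 E1 E2 E3 S0 S1 S2 LB.
  Time assert (T0 : reval env (etau 0) = 0) by reflexivity.
  Time assert (T1 : reval env (etau 1) = reval env (etau 0) + dur A W1).
  { change (reval env et0 + reval env (edur ew0 ew1) = reval env et0 + dur A W1).
    rewrite reval_edur, E0, E1. reflexivity. }
  assert (T2 : reval env (etau 2) = reval env (etau 1) + dur W1 W2).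
  { change (reval env et1 + reval env (edur ew1 ew2) = reval env et1 + dur W1 W2).
    rewrite reval_edur, E1, E2. reflexivity. }
  assert (T3 : reval env (etau 3) = reval env (etau 2) + dur W2 B).
  { change (reval env et2 + reval env (edur ew2 ew3) = reval env et2 + dur W2 B).
    rewrite reval_edur, E2, E3. reflexivity. }
  Time pose proof (sched3 (fun k => reval env (etau k)) (fun k => weval env (ew k))) as HS.
  Time cbv beta in HS.
  Time change (ew 0) with ew0 in HS. change (ew 1) with ew1 in HS.
  change (ew 2) with ew2 in HS. change (ew 3) with ew3 in HS.
  Time rewrite E0, E1, E2, E3 in HS.
  Time destruct (HS T0 T1 T2 T3 S0 S1 S2) as [m1 [m2 [HR [HF HC]]]].
  split.
  - split.
    + exists (reval env (etau 0)), (reval env (etau 3)), m1, m2. split; [exact HF | exact HC].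
    + intros t0 t1 n1_ n2_ c HF' HC'. pose proof (LB t0 t1 n1_ n2_ c HF' HC'). lra.
  - exists m1, m2. split; [exact HR|]. split; [exact HF | exact HC].
Qed.


Theorem theorem3p5 :
  exists (N : nat) (v : rexp) (tau : nat -> rexp) (w : nat -> wexp),
    forall A B : config2, valid_config A -> valid_config B ->
      is_min_sum_value A B (reval (input_env A B) v) /\
      exists m1 m2 : R -> pt,
        realizes N (fun k => reval (input_env A B) (tau k))
                   (fun k => weval (input_env A B) (w k)) m1 m2 /\
        feasible_schedule A B (reval (input_env A B) (tau 0%nat))
                              (reval (input_env A B) (tau N)) m1 m2 /\
        schedule_cost m1 m2 (reval (input_env A B) (tau 0%nat))
                            (reval (input_env A B) (tau N))
                            (reval (input_env A B) v).
Proof.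
  exists 3%nat, (etau 3), etau, ew.
  intros A B HA HB.
  destruct A as [[a1x a1y] [a2x a2y]], B as [[b1x b1y] [b2x b2y]].
  set (env := input_env ((a1x, a1y), (a2x, a2y)) ((b1x, b1y), (b2x, b2y))).
  assert (E0 : weval env ew0 = ((a1x, a1y), (a2x, a2y))) by reflexivity.
  assert (E3 : weval env ew3 = ((b1x, b1y), (b2x, b2y))) by reflexivity.
  destruct (classic (cev env cLR)) as [HL|HL].
  { pose proof HL as HL'. apply cev_eLR in HL'.
    destruct (case_LR a1x a1y a2x a2y b1x b1y b2x b2y HL') as [S0 [S1 [S2 LB]]].
    eapply finish; [exact E0 | | | exact E3 | exact S0 | exact S1 | exact S2 | exact LB].
    - unfold ew1, wsel4; cbn [weval]. rewrite !(sel_LR env) by exact HL.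
      unfold Ym1, Ym2; cbn [reval]. rewrite !reval_esig, !reval_eys. reflexivity.
    - unfold ew2, wsel4, ew3; cbn [weval]. rewrite !(sel_LR env) by exact HL.
      unfold Ym1, Ym2; cbn [reval]. rewrite !reval_esig, !reval_eys. reflexivity. }
  destruct (classic (cev env cTB)) as [HT|HT].
  { pose proof HT as HT'. apply cev_eLR in HT'.
    destruct (case_TB a1x a1y a2x a2y b1x b1y b2x b2y HT') as [S0 [S1 [S2 LB]]].
    eapply finish; [exact E0 | | | exact E3 | exact S0 | exact S1 | exact S2 | exact LB].
    - unfold ew1, wsel4; cbn [weval]. rewrite !(sel_TB env) by assumption.
      unfold Xm1, Xm2; cbn [reval]. rewrite !reval_esig, !reval_eys. reflexivity.
    - unfold ew2, wsel4, ew3; cbn [weval]. rewrite !(sel_TB env) by assumption.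
      unfold Xm1, Xm2; cbn [reval]. rewrite !reval_esig, !reval_eys. reflexivity. }
  destruct (classic (cev env cXF)) as [HX|HX].
  { assert (HX' : XFc (a1x - a2x) (a1y - a2y) (b1x - b2x) (b1y - b2y)).
    { destruct HX as [H1 H2]. apply cev_ehs in H1. apply cev_ehs in H2. split; assumption. }
    destruct (case_XF a1x a1y a2x a2y b1x b1y b2x b2y HB HX') as [S0 [S1 [S2 LB]]].
    eapply finish; [exact E0 | | | exact E3 | exact S0 | exact S1 | exact S2 | exact LB].
    - unfold ew1, wsel4; cbn [weval]. rewrite !(sel_XF env) by assumption. reflexivity.
    - unfold ew2, wsel4, ew3; cbn [weval]. rewrite !(sel_XF env) by assumption. reflexivity. }
  assert (HY' : XFc (a1y - a2y) (a1x - a2x) (b1y - b2y) (b1x - b2x)).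
  { apply case_cover.
    - apply ninf_cases. exact HA.
    - apply ninf_cases. exact HB.
    - intro H. apply HL. apply cev_eLR. exact H.
    - intro H. apply HT. apply cev_eLR. exact H.
    - intros [H1 H2]. apply HX. split; apply cev_ehs; assumption. }
  destruct (case_YF a1x a1y a2x a2y b1x b1y b2x b2y HB HY') as [S0 [S1 [S2 LB]]].
  eapply finish; [exact E0 | | | exact E3 | exact S0 | exact S1 | exact S2 | exact LB].
  - unfold ew1, wsel4; cbn [weval]. rewrite !(sel_YF env) by assumption. reflexivity.
  - unfold ew2, wsel4, ew3; cbn [weval]. rewrite !(sel_YF env) by assumption. reflexivity.
Qed.
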